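(* Assume $\|\mathbf G^{(l)}\|\le A_0B_0^{l-1}$ for all $l\ge1$. For each eigenvalue $\mu=\lambda\pm\mathrm i\sqrt{1-\lambda^2}$ of $\mathbf U$ with $\lambda\in\sigma(\mathbf T)$, $|\lambda|<1$, the perturbed eigenvalue $\mu(\chi)=\lambda(\chi)\pm\mathrm i\sqrt{1-\lambda(\chi)^2}$ has an expansion $\mu(\chi)=\mu+\sum_{n\ge1}\chi^n\mu^{(n)}$ near $\chi=0$, and there exist constants $A_{13},B_{13}>0$ such that $|\mu^{(n)}|\le A_{13}B_{13}^{n-1}$ for all $n\ge1$; consequently the coefficients $a_1(n;m)$ of $\chi^n$ in $\mu(\chi)^{2m}$ satisfy $|a_1(n;m)|\le A_{14}B_{14}^{n-1}$ for constants $A_{14},B_{14}>0$ (depending also on $m$).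
   Context: $\mathbf G=[g_{ij}]$ is an $N\times N$ Google matrix with all entries positive. Perturbation: $\mathbf G(\chi)=[g_{ij}(\chi)]=\mathbf G+\sum_{l\ge1}\chi^l\mathbf G^{(l)}$, $\chi\in\mathbb C$, convergent near $0$, $\|\cdot\|$ the operator $2$-norm; for real $\chi$ near $0$, $\mathbf G(\chi)$ is row-stochastic with positive entries. $\mathbf T(\chi)=[\sqrt{g_{ij}(\chi)g_{ji}(\chi)}]$, $\mathbf T=\mathbf T(0)$; $\lambda(\chi)$ denotes the analytic eigenvalue branch of $\mathbf T(\chi)$ through the eigenvalue $\lambda$ of $\mathbf T$. $\mathbf U=\mathbf S_w(2\mathbf B-\mathbf I)$ with $\mathbf B=\sum_j|\psi_j\rangle\langle\psi_j|$, $|\psi_j\rangle=|j\rangle\otimes\sum_k\sqrt{g_{jk}}|k\rangle$, $\mathbf S_w=\sum_{j,k}|k,j\rangle\langle j,k|$; its eigenvalues associated with $\mathbf T$ are $\lambda\pm\mathrm i\sqrt{1-\lambda^2}$, $\lambda\in\sigma(\mathbf T)$. The square root branch is chosen holomorphic in $\chi$ near $0$. *)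

(* Defs.v *)
From Stdlib Require Import Reals Lra.
Open Scope R_scope.

Record Cx := mkC { Re : R; Im : R }.

Definition RtoC (r : R) : Cx := mkC r 0.
Definition Cx0 : Cx := RtoC 0.
Definition Cx1 : Cx := RtoC 1.
Definition Ci : Cx := mkC 0 1.
Definition Cadd (z w : Cx) : Cx := mkC (Re z + Re w) (Im z + Im w).
Definition Copp (z : Cx) : Cx := mkC (- Re z) (- Im z).
Definition Csub (z w : Cx) : Cx := Cadd z (Copp w).
Definition Cmul (z w : Cx) : Cx :=
  mkC (Re z * Re w - Im z * Im w) (Re z * Im w + Im z * Re w).
Fixpoint Cpow (z : Cx) (n : nat) : Cx :=
  match n with O => Cx1 | S k => Cmul z (Cpow z k) end.
Definition Cabs (z : Cx) : R := sqrt (Re z * Re z + Im z * Im z).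

(** Principal square root (holomorphic on Cx minus the non-positive reals,
    in particular near any positive real number). *)
Definition Csqrt (z : Cx) : Cx :=
  mkC (sqrt ((Cabs z + Re z) / 2))
      ((if Rlt_dec (Im z) 0 then -1 else 1) * sqrt ((Cabs z - Re z) / 2)).

Fixpoint Csum (a : nat -> Cx) (n : nat) : Cx :=
  match n with O => Cx0 | S k => Cadd (Csum a k) (a k) end.

Definition Cseries_sum (a : nat -> Cx) (s : Cx) : Prop :=
  forall eps : R, 0 < eps ->
    exists M : nat, forall n : nat, (M <= n)%nat -> Cabs (Csub (Csum a n) s) < eps.

Definition has_expansion (f : Cx -> Cx) (c : nat -> Cx) : Prop :=
  exists r : R, 0 < r /\
    forall z : Cx, Cabs z < r -> Cseries_sum (fun n => Cmul (c n) (Cpow z n)) (f z).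

(** N x N matrices and vectors, indices 0..N-1 *)
Definition Mat := nat -> nat -> Cx.
Definition Vec := nat -> Cx.

Definition matvec (N : nat) (M : Mat) (v : Vec) : Vec :=
  fun i => Csum (fun j => Cmul (M i j) (v j)) N.

Fixpoint Rsum (a : nat -> R) (n : nat) : R :=
  match n with O => 0 | S k => Rsum a k + a k end.

Definition vnorm (N : nat) (v : Vec) : R :=
  sqrt (Rsum (fun j => Rsqr (Cabs (v j))) N).

Definition is_eigenvalue (N : nat) (M : Mat) (z : Cx) : Prop :=
  exists v : Vec, (exists i, (i < N)%nat /\ v i <> Cx0) /\
    forall i, (i < N)%nat -> matvec N M v i = Cmul z (v i).

Definition Tmat (g : Mat) : Mat := fun i j => Csqrt (Cmul (g i j) (g j i)).

Definition pos_row_stochastic (N : nat) (M : Mat) : Prop :=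
  (forall i j, (i < N)%nat -> (j < N)%nat -> Im (M i j) = 0 /\ 0 < Re (M i j)) /\
  (forall i, (i < N)%nat -> Csum (fun j => M i j) N = Cx1).

(* Main.v *)
Require Import Defs.
From Stdlib Require Import Reals Lra Lia Psatz List ClassicalEpsilon.
Open Scope R_scope.

Lemma Cx_eq (z w : Cx) : Re z = Re w -> Im z = Im w -> z = w.
Proof. destruct z, w; simpl; intros; subst; reflexivity. Qed.

Ltac cx := apply Cx_eq; unfold Csub, Copp, Cadd, Cmul, Cx0, Cx1, RtoC, Ci; simpl; ring.

Lemma Cabs_ge0 z : 0 <= Cabs z.
Proof. apply sqrt_pos. Qed.

Lemma Cabs_sq z : Cabs z * Cabs z = Re z * Re z + Im z * Im z.
Proof. unfold Cabs; apply sqrt_sqrt; nra. Qed.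

Lemma sq_le_imp (a b : R) : 0 <= b -> a * a <= b * b -> a <= b.
Proof. intros; nra. Qed.

Lemma Cabs_mul z w : Cabs (Cmul z w) = Cabs z * Cabs w.
Proof.
  unfold Cabs, Cmul; simpl. rewrite <- sqrt_mult_alt by nra. f_equal; ring.
Qed.

Lemma Re_le z : Rabs (Re z) <= Cabs z.
Proof.
  apply sq_le_imp. apply Cabs_ge0. rewrite Cabs_sq.
  assert (Rabs (Re z) * Rabs (Re z) = Re z * Re z) by (rewrite <- Rabs_mult; apply Rabs_right; nra). nra.
Qed.

Lemma Im_le z : Rabs (Im z) <= Cabs z.
Proof.
  apply sq_le_imp. apply Cabs_ge0. rewrite Cabs_sq.
  assert (Rabs (Im z) * Rabs (Im z) = Im z * Im z) by (rewrite <- Rabs_mult; apply Rabs_right; nra). nra.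
Qed.

Lemma Cabs_le_sum z : Cabs z <= Rabs (Re z) + Rabs (Im z).
Proof.
  apply sq_le_imp. pose proof (Rabs_pos (Re z)); pose proof (Rabs_pos (Im z)); lra.
  rewrite Cabs_sq.
  assert (Rabs (Re z) * Rabs (Re z) = Re z * Re z) by (rewrite <- Rabs_mult; apply Rabs_right; nra).
  assert (Rabs (Im z) * Rabs (Im z) = Im z * Im z) by (rewrite <- Rabs_mult; apply Rabs_right; nra).
  pose proof (Rabs_pos (Re z)); pose proof (Rabs_pos (Im z)). nra.
Qed.

Lemma Cabs_triangle z w : Cabs (Cadd z w) <= Cabs z + Cabs w.
Proof.
  apply sq_le_imp. pose proof (Cabs_ge0 z); pose proof (Cabs_ge0 w); lra.
  rewrite Cabs_sq. unfold Cadd; simpl.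
  assert (Re z * Re w + Im z * Im w <= Cabs z * Cabs w).
  { apply sq_le_imp. pose proof (Cabs_ge0 z); pose proof (Cabs_ge0 w); nra.
    replace (Cabs z * Cabs w * (Cabs z * Cabs w)) with ((Cabs z * Cabs z) * (Cabs w * Cabs w)) by ring.
    rewrite !Cabs_sq. pose proof (pow2_ge_0 (Re z * Im w - Im z * Re w)). nra. }
  assert ((Cabs z + Cabs w) * (Cabs z + Cabs w) = Cabs z * Cabs z + Cabs w * Cabs w + 2 * (Cabs z * Cabs w)) by ring.
  rewrite H0, !Cabs_sq. nra.
Qed.

Lemma Cabs_opp z : Cabs (Copp z) = Cabs z.
Proof. unfold Cabs, Copp; simpl; f_equal; ring. Qed.

Lemma Cabs_RtoC r : Cabs (RtoC r) = Rabs r.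
Proof. unfold Cabs, RtoC; simpl. rewrite <- sqrt_Rsqr_abs. unfold Rsqr; f_equal; ring. Qed.

Lemma Cabs_Cx1 : Cabs Cx1 = 1.
Proof. unfold Cx1; rewrite Cabs_RtoC; apply Rabs_R1. Qed.

Lemma Cabs_Cx0 : Cabs Cx0 = 0.
Proof. unfold Cx0; rewrite Cabs_RtoC; apply Rabs_R0. Qed.

Lemma Cabs_pow z n : Cabs (Cpow z n) = Cabs z ^ n.
Proof. induction n; simpl. apply Cabs_Cx1. rewrite Cabs_mul, IHn; ring. Qed.

Lemma Cabs_zero z : Cabs z = 0 -> z = Cx0.
Proof.
  intros H. assert (Re z * Re z + Im z * Im z = 0) by (rewrite <- Cabs_sq, H; ring).
  apply Cx_eq; simpl; nra.
Qed.

Lemma Cabs_sub_sym z w : Cabs (Csub z w) = Cabs (Csub w z).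
Proof. unfold Cabs, Csub, Cadd, Copp; simpl; f_equal; ring. Qed.

Lemma Cabs_sub_triangle z w : Cabs (Csub z w) <= Cabs z + Cabs w.
Proof. unfold Csub. rewrite <- (Cabs_opp w). apply Cabs_triangle. Qed.

Lemma Cabs_sub_tri3 a b c : Cabs (Csub a c) <= Cabs (Csub a b) + Cabs (Csub b c).
Proof.
  replace (Csub a c) with (Cadd (Csub a b) (Csub b c)) by cx. apply Cabs_triangle.
Qed.

Lemma Cmul_integral u v : Cmul u v = Cx0 -> u = Cx0 \/ v = Cx0.
Proof.
  intros H. assert (Cabs u * Cabs v = 0) by (rewrite <- Cabs_mul, H; apply Cabs_Cx0).
  destruct (Rmult_integral _ _ H0); [left|right]; apply Cabs_zero; auto.
Qed.

Lemma Csum_add f g n : Csum (fun k => Cadd (f k) (g k)) n = Cadd (Csum f n) (Csum g n).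
Proof. induction n; simpl. cx. rewrite IHn. cx. Qed.

Lemma Csum_scal w f n : Csum (fun k => Cmul w (f k)) n = Cmul w (Csum f n).
Proof. induction n; simpl. cx. rewrite IHn. cx. Qed.

Lemma Csum_scal_r w f n : Csum (fun k => Cmul (f k) w) n = Cmul (Csum f n) w.
Proof. induction n; simpl. cx. rewrite IHn. cx. Qed.

Lemma Csum_ext_lt f g n : (forall k, (k < n)%nat -> f k = g k) -> Csum f n = Csum g n.
Proof. induction n; simpl; intros H. reflexivity. rewrite IHn by (intros; apply H; lia). rewrite H by lia. reflexivity. Qed.

Lemma Rsum_ext_lt f g n : (forall k, (k < n)%nat -> f k = g k) -> Rsum f n = Rsum g n.
Proof. induction n; simpl; intros H. reflexivity. rewrite IHn by (intros; apply H; lia). rewrite H by lia. reflexivity. Qed.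

Lemma Rsum_le f g n : (forall k, (k < n)%nat -> f k <= g k) -> Rsum f n <= Rsum g n.
Proof. induction n; simpl; intros H. lra. pose proof (H n ltac:(lia)). pose proof (IHn ltac:(intros; apply H; lia)). lra. Qed.

Lemma Rsum_nonneg f n : (forall k, 0 <= f k) -> 0 <= Rsum f n.
Proof. induction n; simpl; intros H. lra. pose proof (H n). pose proof (IHn H). lra. Qed.

Lemma Rsum_mono f m n : (forall k, 0 <= f k) -> (m <= n)%nat -> Rsum f m <= Rsum f n.
Proof. intros H Hmn. induction Hmn. lra. simpl. pose proof (H m0). lra. Qed.

Lemma Rsum_term f k n : (forall k, 0 <= f k) -> (k < n)%nat -> f k <= Rsum f n.
Proof.
  intros H Hk. apply Rle_trans with (Rsum f (S k)). simpl. pose proof (Rsum_nonneg f k H); lra.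
  apply Rsum_mono; auto.
Qed.

Lemma Rsum_const c n : Rsum (fun _ => c) n = INR n * c.
Proof. induction n; simpl. ring. rewrite IHn. destruct n; simpl; ring. Qed.

Lemma Rsum_scal c f n : Rsum (fun k => c * f k) n = c * Rsum f n.
Proof. induction n; simpl. ring. rewrite IHn. ring. Qed.

Lemma Csum_abs f n : Cabs (Csum f n) <= Rsum (fun k => Cabs (f k)) n.
Proof. induction n; simpl. rewrite Cabs_Cx0; lra. eapply Rle_trans. apply Cabs_triangle. lra. Qed.

Lemma Re_Csum f n : Re (Csum f n) = Rsum (fun k => Re (f k)) n.
Proof. induction n; simpl. reflexivity. rewrite IHn; reflexivity. Qed.
Lemma Im_Csum f n : Im (Csum f n) = Rsum (fun k => Im (f k)) n.
Proof. induction n; simpl. reflexivity. rewrite IHn; reflexivity. Qed.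

Lemma Cpow_add z a b : Cpow z (a + b) = Cmul (Cpow z a) (Cpow z b).
Proof. induction a; simpl. cx. rewrite IHa. cx. Qed.

Lemma Cmul_0_l z : Cmul Cx0 z = Cx0.
Proof. cx. Qed.
Lemma Cmul_0_r z : Cmul z Cx0 = Cx0.
Proof. cx. Qed.
Lemma Re_Csub z w : Re (Csub z w) = Re z - Re w.
Proof. reflexivity. Qed.
Lemma Im_Csub z w : Im (Csub z w) = Im z - Im w.
Proof. reflexivity. Qed.

Definition Clim (u : nat -> Cx) (l : Cx) : Prop :=
  forall eps : R, 0 < eps -> exists M : nat, forall n, (M <= n)%nat -> Cabs (Csub (u n) l) < eps.

Lemma Clim_iff u l : Clim u l <-> Un_cv (fun n => Re (u n)) (Re l) /\ Un_cv (fun n => Im (u n)) (Im l).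
Proof.
  split.
  - intros H; split; intros eps Heps; destruct (H eps Heps) as [M HM]; exists M; intros n Hn;
    unfold Rdist; specialize (HM n Hn).
    + pose proof (Re_le (Csub (u n) l)). rewrite Re_Csub in H0. lra.
    + pose proof (Im_le (Csub (u n) l)). rewrite Im_Csub in H0. lra.
  - intros [H1 H2] eps Heps.
    destruct (H1 (eps/2) ltac:(lra)) as [M1 HM1]. destruct (H2 (eps/2) ltac:(lra)) as [M2 HM2].
    exists (M1 + M2)%nat. intros n Hn.
    specialize (HM1 n ltac:(lia)). specialize (HM2 n ltac:(lia)). unfold Rdist in *.
    eapply Rle_lt_trans. apply Cabs_le_sum. rewrite Re_Csub, Im_Csub. lra.
Qed.

Lemma Un_cv_ext u v l : (forall n, u n = v n) -> Un_cv u l -> Un_cv v l.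
Proof. intros E H eps Heps. destruct (H eps Heps) as [N HN]. exists N. intros n Hn. rewrite <- E. auto. Qed.

Lemma Clim_unique u l1 l2 : Clim u l1 -> Clim u l2 -> l1 = l2.
Proof.
  intros H1 H2. apply Clim_iff in H1. apply Clim_iff in H2. destruct H1, H2.
  apply Cx_eq; eapply UL_sequence; eauto.
Qed.

Lemma Clim_add u v a b : Clim u a -> Clim v b -> Clim (fun n => Cadd (u n) (v n)) (Cadd a b).
Proof.
  rewrite !Clim_iff. intros [H1 H2] [H3 H4]. split; simpl.
  apply (CV_plus _ _ _ _ H1 H3). apply (CV_plus _ _ _ _ H2 H4).
Qed.

Lemma Clim_mul u v a b : Clim u a -> Clim v b -> Clim (fun n => Cmul (u n) (v n)) (Cmul a b).
Proof.
  rewrite !Clim_iff. intros [H1 H2] [H3 H4]. split; simpl.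
  apply (CV_minus _ _ _ _ (CV_mult _ _ _ _ H1 H3) (CV_mult _ _ _ _ H2 H4)).
  apply (CV_plus _ _ _ _ (CV_mult _ _ _ _ H1 H4) (CV_mult _ _ _ _ H2 H3)).
Qed.

Lemma Clim_const a : Clim (fun _ => a) a.
Proof. intros eps Heps. exists 0%nat. intros. replace (Csub a a) with Cx0 by cx. rewrite Cabs_Cx0. lra. Qed.

Lemma Clim_ext u v l : (forall n, u n = v n) -> Clim u l -> Clim v l.
Proof. intros E H eps Heps. destruct (H eps Heps) as [N HN]. exists N. intros n Hn. rewrite <- E. auto. Qed.

Lemma Clim_ext_ev u v l N0 : (forall n, (N0 <= n)%nat -> u n = v n) -> Clim u l -> Clim v l.
Proof. intros E H eps Heps. destruct (H eps Heps) as [N HN]. exists (N + N0)%nat. intros n Hn. rewrite <- E by lia. apply HN; lia. Qed.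

Lemma Clim_sub0 u v l : Clim (fun n => Csub (u n) (v n)) Cx0 -> Clim v l -> Clim u l.
Proof.
  intros H1 H2. pose proof (Clim_add _ _ _ _ H1 H2) as H.
  replace (Cadd Cx0 l) with l in H by cx.
  eapply Clim_ext. 2: apply H. intros n; simpl. cx.
Qed.

Lemma Clim_le u l B N0 : (forall n, (N0 <= n)%nat -> Cabs (u n) <= B) -> Clim u l -> Cabs l <= B.
Proof.
  intros Hb H. destruct (Rle_or_lt (Cabs l) B) as [|Hlt]; auto.
  destruct (H (Cabs l - B) ltac:(lra)) as [N HN]. specialize (HN (N + N0)%nat ltac:(lia)).
  specialize (Hb (N + N0)%nat ltac:(lia)).
  set (m := (N + N0)%nat) in *.
  assert (E : l = Cadd (u m) (Csub l (u m))) by cx.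
  assert (Cabs l <= Cabs (u m) + Cabs (Csub l (u m))) by (rewrite E at 1; apply Cabs_triangle).
  rewrite Cabs_sub_sym in HN. lra.
Qed.

Lemma tail_bound (a : nat -> Cx) M q : 0 <= M -> 0 <= q < 1 -> (forall k, Cabs (a k) <= M * q ^ k) ->
  forall n d, Cabs (Csub (Csum a (n + d)) (Csum a n)) <= M * q ^ n * (1 - q ^ d) / (1 - q).
Proof.
  intros HM Hq Ha n d. induction d.
  - rewrite Nat.add_0_r. replace (Csub (Csum a n) (Csum a n)) with Cx0 by cx. rewrite Cabs_Cx0. simpl.
    replace (M * q ^ n * (1 - 1) / (1 - q)) with 0 by (field; lra). lra.
  - replace (n + S d)%nat with (S (n + d)) by lia. simpl.
    replace (Csub (Cadd (Csum a (n + d)) (a (n + d)%nat)) (Csum a n))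
      with (Cadd (Csub (Csum a (n + d)) (Csum a n)) (a (n+d)%nat)) by cx.
    eapply Rle_trans. apply Cabs_triangle. specialize (Ha (n + d)%nat). rewrite pow_add in Ha.
    apply Rle_trans with (M * q ^ n * (1 - q ^ d) / (1 - q) + M * (q ^ n * q ^ d)). lra.
    right. field. lra.
Qed.

Lemma tail_bound' (a : nat -> Cx) M q : 0 <= M -> 0 <= q < 1 -> (forall k, Cabs (a k) <= M * q ^ k) ->
  forall n d, Cabs (Csub (Csum a (n + d)) (Csum a n)) <= M * q ^ n / (1 - q).
Proof.
  intros HM Hq Ha n d. eapply Rle_trans. apply (tail_bound a M q HM Hq Ha n d).
  unfold Rdiv. apply Rmult_le_compat_r. apply Rlt_le, Rinv_0_lt_compat; lra.
  pose proof (pow_le q n ltac:(lra)). pose proof (pow_le q d ltac:(lra)).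
  assert (0 <= M * q ^ n) by nra. nra.
Qed.

Lemma geom_small q eps : 0 <= q < 1 -> 0 < eps -> exists N, forall n, (N <= n)%nat -> q ^ n < eps.
Proof.
  intros Hq He. destruct (pow_lt_1_zero q ltac:(rewrite Rabs_right; lra) eps He) as [N HN].
  exists N. intros n Hn. specialize (HN n Hn). rewrite Rabs_right in HN; auto. apply Rle_ge, pow_le; lra.
Qed.

Lemma geom_converges (a : nat -> Cx) M q : 0 <= M -> 0 <= q < 1 -> (forall k, Cabs (a k) <= M * q ^ k) ->
  exists s, Cseries_sum a s.
Proof.
  intros HM Hq Ha.
  assert (Hc : forall eps, 0 < eps -> exists N, forall n m, (N <= n)%nat -> (N <= m)%nat ->
     Cabs (Csub (Csum a n) (Csum a m)) < eps).
  { intros eps He. destruct (geom_small q (eps * (1 - q) / (M + 1)) Hq) as [N HN].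
    apply Rdiv_lt_0_compat; [apply Rmult_lt_0_compat|]; lra.
    exists N. intros n m Hn Hm.
    assert (Hgen : forall n d, (N <= n)%nat -> Cabs (Csub (Csum a (n + d)) (Csum a n)) < eps).
    { intros n0 d Hn0. eapply Rle_lt_trans. apply (tail_bound' a M q HM Hq Ha n0 d).
      specialize (HN n0 Hn0). apply Rmult_lt_reg_r with (1 - q). lra.
      unfold Rdiv. rewrite Rmult_assoc, Rinv_l, Rmult_1_r by lra.
      apply Rmult_lt_compat_r with (r := M + 1) in HN; [|lra].
      unfold Rdiv in HN. rewrite Rmult_assoc, Rinv_l, Rmult_1_r in HN by lra.
      pose proof (pow_le q n0 ltac:(lra)). nra. }
    destruct (Nat.le_ge_cases m n).
    - replace n with (m + (n - m))%nat by lia. apply Hgen; auto.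
    - rewrite Cabs_sub_sym. replace m with (n + (m - n))%nat by lia. apply Hgen; auto. }
  assert (HR : Cauchy_crit (fun n => Re (Csum a n))).
  { intros eps He. destruct (Hc eps He) as [N HN]. exists N. intros n m Hn Hm. unfold Rdist.
    pose proof (Re_le (Csub (Csum a n) (Csum a m))). specialize (HN n m Hn Hm).
    rewrite Re_Csub in H. lra. }
  assert (HI : Cauchy_crit (fun n => Im (Csum a n))).
  { intros eps He. destruct (Hc eps He) as [N HN]. exists N. intros n m Hn Hm. unfold Rdist.
    pose proof (Im_le (Csub (Csum a n) (Csum a m))). specialize (HN n m Hn Hm).
    rewrite Im_Csub in H. lra. }
  destruct (R_complete _ HR) as [lr Hr]. destruct (R_complete _ HI) as [li Hi].
  exists (mkC lr li). apply (proj2 (Clim_iff _ _)). split; simpl; auto.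
Qed.
Lemma series_lim a s : Cseries_sum a s <-> Clim (Csum a) s.
Proof. reflexivity. Qed.

Lemma exp_ext_near f g c : has_expansion f c ->
  (exists rho, 0 < rho /\ forall z, Cabs z < rho -> f z = g z) -> has_expansion g c.
Proof.
  intros [r [Hr H]] [rho [Hrho E]]. exists (Rmin r rho). split. apply Rmin_pos; auto.
  intros z Hz. rewrite <- E. apply H. eapply Rlt_le_trans; [apply Hz| apply Rmin_l].
  eapply Rlt_le_trans; [apply Hz| apply Rmin_r].
Qed.

Lemma exp_ext f g c : has_expansion f c -> (forall z, f z = g z) -> has_expansion g c.
Proof. intros H E. apply (exp_ext_near f); auto. exists 1. split. lra. auto. Qed.

Lemma exp_coef_ext f c d : has_expansion f c -> (forall n, c n = d n) -> has_expansion f d.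
Proof.
  intros [r [Hr H]] E. exists r. split; auto. intros z Hz. specialize (H z Hz).
  apply series_lim. apply series_lim in H. eapply Clim_ext. 2: apply H.
  intros n. apply Csum_ext_lt. intros. rewrite E. reflexivity.
Qed.

Definition constc (k : Cx) (n : nat) : Cx := match n with O => k | S _ => Cx0 end.

Lemma exp_const k : has_expansion (fun _ => k) (constc k).
Proof.
  exists 1. split. lra. intros z _. apply series_lim.
  apply (Clim_ext_ev (fun _ => k)) with 1%nat. 2: apply Clim_const.
  intros n Hn. destruct n. lia. clear Hn. induction n. simpl. cx.
  simpl. simpl in IHn. rewrite <- IHn. cx.
Qed.

Lemma exp_scale f c k : has_expansion f c ->
  has_expansion (fun z => Cmul k (f z)) (fun n => Cmul k (c n)).
Proof.
  intros [r [Hr H]]. exists r. split; auto. intros z Hz. specialize (H z Hz).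
  apply series_lim. apply series_lim in H.
  pose proof (Clim_mul _ _ _ _ (Clim_const k) H).
  eapply Clim_ext. 2: apply H0. intros n; simpl. rewrite <- Csum_scal. apply Csum_ext_lt. intros; cx.
Qed.

Lemma exp_add f g c d : has_expansion f c -> has_expansion g d ->
  has_expansion (fun z => Cadd (f z) (g z)) (fun n => Cadd (c n) (d n)).
Proof.
  intros [r [Hr H]] [r' [Hr' H']]. exists (Rmin r r'). split. apply Rmin_pos; auto.
  intros z Hz. specialize (H z ltac:(eapply Rlt_le_trans; [apply Hz| apply Rmin_l])).
  specialize (H' z ltac:(eapply Rlt_le_trans; [apply Hz| apply Rmin_r])).
  apply series_lim. apply series_lim in H. apply series_lim in H'.
  pose proof (Clim_add _ _ _ _ H H').
  eapply Clim_ext. 2: apply H0. intros n; simpl. rewrite <- Csum_add. apply Csum_ext_lt. intros; cx.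
Qed.

Lemma Cpow_RtoC x n : Cpow (RtoC x) n = RtoC (x ^ n).
Proof. induction n; simpl. reflexivity. rewrite IHn. cx. Qed.

Lemma exp_bound f c : has_expansion f c ->
  exists M rho, 0 < M /\ 0 < rho /\ forall n, Cabs (c n) <= M * rho ^ n.
Proof.
  intros [r [Hr H]]. set (z0 := RtoC (r / 2)).
  assert (Hz0 : Cabs z0 = r / 2) by (unfold z0; rewrite Cabs_RtoC; apply Rabs_right; lra).
  specialize (H z0 ltac:(lra)). apply series_lim in H.
  set (a := fun n => Cmul (c n) (Cpow z0 n)) in *.
  destruct (H (1/2) ltac:(lra)) as [N HN].
  assert (Ht : forall n, (N <= n)%nat -> Cabs (a n) <= 1).
  { intros n Hn. pose proof (HN n Hn). pose proof (HN (S n) ltac:(lia)). simpl in H1.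
    assert (E : a n = Csub (Cadd (Csum a n) (a n)) (Csum a n)) by cx.
    rewrite E. eapply Rle_trans. apply (Cabs_sub_tri3 _ (f z0)). rewrite (Cabs_sub_sym (f z0)). lra. }
  set (M := 1 + Rsum (fun k => Cabs (a k)) N).
  assert (HM : forall n, Cabs (a n) <= M).
  { intros n. unfold M. pose proof (Rsum_nonneg (fun k => Cabs (a k)) N (fun k => Cabs_ge0 _)).
    destruct (Compare_dec.le_lt_dec N n). specialize (Ht n l). lra.
    pose proof (Rsum_term (fun k => Cabs (a k)) n N (fun k => Cabs_ge0 _) l). simpl in H1. lra. }
  exists M, (2 / r). split. unfold M; pose proof (Rsum_nonneg (fun k => Cabs (a k)) N (fun k => Cabs_ge0 _)); lra.
  split. apply Rdiv_lt_0_compat; lra.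
  intros n. specialize (HM n). unfold a in HM. rewrite Cabs_mul, Cabs_pow, Hz0 in HM.
  assert (0 < (r/2) ^ n) by (apply pow_lt; lra).
  replace (2 / r) with (/ (r / 2)) by (field; lra). rewrite pow_inv.
  apply Rmult_le_reg_r with ((r/2)^n); auto. rewrite Rmult_assoc, Rinv_l by lra. lra.
Qed.

Lemma exp_at0 f c : has_expansion f c -> f Cx0 = c O.
Proof.
  intros [r [Hr H]]. specialize (H Cx0 ltac:(rewrite Cabs_Cx0; lra)). apply series_lim in H.
  eapply Clim_unique. apply H. apply (Clim_ext_ev (fun _ => c O)) with 1%nat. 2: apply Clim_const.
  intros n Hn. destruct n. lia. clear Hn. induction n. simpl. cx.
  simpl. simpl in IHn. rewrite <- IHn. cx.
Qed.

Lemma exp_unique_val f g c : has_expansion f c -> has_expansion g c ->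
  exists rho, 0 < rho /\ forall z, Cabs z < rho -> f z = g z.
Proof.
  intros [r [Hr H]] [r' [Hr' H']]. exists (Rmin r r'). split. apply Rmin_pos; auto.
  intros z Hz. specialize (H z ltac:(eapply Rlt_le_trans; [apply Hz| apply Rmin_l])).
  specialize (H' z ltac:(eapply Rlt_le_trans; [apply Hz| apply Rmin_r])).
  eapply Clim_unique; eauto.
Qed.

Definition sumfun (c : nat -> Cx) (z : Cx) : Cx :=
  epsilon (inhabits Cx0) (fun s => Cseries_sum (fun n => Cmul (c n) (Cpow z n)) s).

Lemma exp_of_bound c M rho : 0 <= M -> 0 < rho -> (forall n, Cabs (c n) <= M * rho ^ n) ->
  has_expansion (sumfun c) c.
Proof.
  intros HM Hrho Hc. exists (/ (2 * rho)). split. apply Rinv_0_lt_compat; lra.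
  intros z Hz. unfold sumfun. apply epsilon_spec.
  apply (geom_converges _ M (rho * Cabs z)); auto.
  split. pose proof (Cabs_ge0 z); nra.
  apply Rmult_lt_compat_l with (r := rho) in Hz; auto.
  replace (rho * / (2 * rho)) with (1/2) in Hz by (field; lra). lra.
  intros k. rewrite Cabs_mul, Cabs_pow, Rpow_mult_distr, <- Rmult_assoc.
  apply Rmult_le_compat_r. apply pow_le, Cabs_ge0. auto.
Qed.
Definition conv (c d : nat -> Cx) (n : nat) : Cx := Csum (fun k => Cmul (c k) (d (n - k)%nat)) (S n).

Lemma Csum_swap a b N :
  Csum (conv a b) N = Csum (fun k => Cmul (a k) (Csum b (N - k))) N.
Proof.
  induction N. reflexivity.
  change (Csum (conv a b) (S N)) with (Cadd (Csum (conv a b) N) (conv a b N)).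
  rewrite IHN. change (Csum (fun k => Cmul (a k) (Csum b (S N - k))) (S N)) with
    (Cadd (Csum (fun k => Cmul (a k) (Csum b (S N - k))) N) (Cmul (a N) (Csum b (S N - N)))).
  rewrite (Csum_ext_lt (fun k => Cmul (a k) (Csum b (S N - k)))
             (fun k => Cadd (Cmul (a k) (Csum b (N - k))) (Cmul (a k) (b (N - k)%nat)))).
  2: { intros k Hk. replace (S N - k)%nat with (S (N - k)) by lia. simpl. cx. }
  rewrite Csum_add. unfold conv. simpl (Csum _ (S N)).
  replace (S N - N)%nat with 1%nat by lia. replace (N - N)%nat with 0%nat by lia. simpl. cx.
Qed.

Definition convR (c d : nat -> R) (n : nat) : R := Rsum (fun k => c k * d (n - k)%nat) (S n).

Lemma Rsum_add f g n : Rsum (fun k => f k + g k) n = Rsum f n + Rsum g n.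
Proof. induction n; simpl. ring. rewrite IHn. ring. Qed.

Lemma Rsum_swap a b N :
  Rsum (convR a b) N = Rsum (fun k => a k * Rsum b (N - k)) N.
Proof.
  induction N. reflexivity.
  change (Rsum (convR a b) (S N)) with (Rsum (convR a b) N + convR a b N).
  rewrite IHN. change (Rsum (fun k => a k * Rsum b (S N - k)) (S N)) with
    (Rsum (fun k => a k * Rsum b (S N - k)) N + a N * Rsum b (S N - N)).
  rewrite (Rsum_ext_lt (fun k => a k * Rsum b (S N - k))
             (fun k => a k * Rsum b (N - k) + a k * b (N - k)%nat)).
  2: { intros k Hk. replace (S N - k)%nat with (S (N - k)) by lia. simpl. ring. }
  rewrite Rsum_add. unfold convR. simpl (Rsum _ (S N)).
  replace (S N - N)%nat with 1%nat by lia. replace (N - N)%nat with 0%nat by lia. simpl. ring.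
Qed.

Lemma Csum_sub f g n : Csum (fun k => Csub (f k) (g k)) n = Csub (Csum f n) (Csum g n).
Proof. induction n; simpl. cx. rewrite IHn. cx. Qed.

Lemma INR_le_pow2 n : INR n <= 2 ^ n.
Proof.
  induction n. simpl; lra. rewrite S_INR. simpl. pose proof (pow_R1_Rle 2 n ltac:(lra)). lra.
Qed.

Lemma exp_mul f g c d : has_expansion f c -> has_expansion g d ->
  has_expansion (fun z => Cmul (f z) (g z)) (conv c d).
Proof.
  intros Hf Hg.
  destruct (exp_bound f c Hf) as [M1 [r1 [HM1 [Hr1 Hb1]]]].
  destruct (exp_bound g d Hg) as [M2 [r2 [HM2 [Hr2 Hb2]]]].
  destruct Hf as [R1 [HR1 Hf]]. destruct Hg as [R2 [HR2 Hg]].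
  set (M := M1 + M2). set (rho := r1 + r2).
  assert (HM : 0 < M) by (unfold M; lra). assert (Hrho : 0 < rho) by (unfold rho; lra).
  assert (Hc : forall n, Cabs (c n) <= M * rho ^ n).
  { intros n. eapply Rle_trans. apply Hb1. apply Rmult_le_compat.
    lra. apply pow_le; lra. unfold M; lra. apply pow_incr; unfold rho; lra. }
  assert (Hd : forall n, Cabs (d n) <= M * rho ^ n).
  { intros n. eapply Rle_trans. apply Hb2. apply Rmult_le_compat.
    lra. apply pow_le; lra. unfold M; lra. apply pow_incr; unfold rho; lra. }
  exists (Rmin (Rmin R1 R2) (/ (4 * rho))). split.
  { apply Rmin_pos. apply Rmin_pos; auto. apply Rinv_0_lt_compat; lra. }
  intros z Hz.
  assert (Hz1 : Cabs z < R1) by (eapply Rlt_le_trans; [apply Hz|]; eapply Rle_trans; [apply Rmin_l|apply Rmin_l]).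
  assert (Hz2 : Cabs z < R2) by (eapply Rlt_le_trans; [apply Hz|]; eapply Rle_trans; [apply Rmin_l|apply Rmin_r]).
  assert (Hz3 : Cabs z < / (4 * rho)) by (eapply Rlt_le_trans; [apply Hz|]; apply Rmin_r).
  set (q := rho * Cabs z).
  assert (Hq : 0 <= q <= 1/4).
  { unfold q. split. pose proof (Cabs_ge0 z); nra.
    apply Rmult_lt_compat_l with (r := rho) in Hz3; auto.
    replace (rho * / (4 * rho)) with (1/4) in Hz3 by (field; lra). lra. }
  specialize (Hf z Hz1). specialize (Hg z Hz2). apply series_lim in Hf, Hg. apply series_lim.
  set (a := fun n => Cmul (c n) (Cpow z n)) in *.
  set (b := fun n => Cmul (d n) (Cpow z n)) in *.
  assert (Ha : forall k, Cabs (a k) <= M * q ^ k).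
  { intros k. unfold a, q. rewrite Cabs_mul, Cabs_pow, Rpow_mult_distr, <- Rmult_assoc.
    apply Rmult_le_compat_r. apply pow_le, Cabs_ge0. auto. }
  assert (Hb : forall k, Cabs (b k) <= M * q ^ k).
  { intros k. unfold b, q. rewrite Cabs_mul, Cabs_pow, Rpow_mult_distr, <- Rmult_assoc.
    apply Rmult_le_compat_r. apply pow_le, Cabs_ge0. auto. }
  apply Clim_sub0 with (v := fun N => Cmul (Csum a N) (Csum b N)).
  2: apply Clim_mul; auto.
  assert (Ecs : forall N, Csum (fun n => Cmul (conv c d n) (Cpow z n)) N = Csum (conv a b) N).
  { intros N. apply Csum_ext_lt. intros n _. unfold conv. rewrite <- Csum_scal_r.
    apply Csum_ext_lt. intros k Hk. unfold a, b.
    replace (Cpow z n) with (Cpow z (k + (n - k))) by (f_equal; lia). rewrite Cpow_add. cx. }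
  assert (Hdiff : forall N, Cabs (Csub (Csum (fun n => Cmul (conv c d n) (Cpow z n)) N)
                                     (Cmul (Csum a N) (Csum b N))) <= INR N * (M * M * q ^ N / (1 - q))).
  { intros N. rewrite Ecs, Csum_swap, <- Csum_scal_r.
    replace (Csub (Csum (fun k => Cmul (a k) (Csum b (N - k))) N) (Csum (fun k => Cmul (a k) (Csum b N)) N))
      with (Csum (fun k => Cmul (a k) (Csub (Csum b (N - k)) (Csum b N))) N).
    2: { rewrite <- Csum_sub. apply Csum_ext_lt. intros; cx. }
    eapply Rle_trans. apply Csum_abs. rewrite <- Rsum_const. apply Rsum_le. intros k Hk.
    rewrite Cabs_mul, Cabs_sub_sym.
    assert (Ht : Cabs (Csub (Csum b N) (Csum b (N - k))) <= M * q ^ (N - k) / (1 - q)).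
    { replace N with ((N - k) + k)%nat at 1 by lia. apply tail_bound'; auto; lra. }
    specialize (Ha k).
    replace (M * M * q ^ N / (1 - q)) with ((M * q ^ k) * (M * q ^ (N - k) / (1 - q))).
    2: { assert (Eq : q ^ N = q ^ k * q ^ (N - k)) by (rewrite <- pow_add; f_equal; lia).
         rewrite Eq. field. lra. }
    apply Rmult_le_compat; auto using Cabs_ge0. }
  intros eps Heps.
  destruct (geom_small (1/2) (eps / (2 * M * M + 1))) as [N0 HN0]. lra.
  apply Rdiv_lt_0_compat; nra.
  exists N0. intros N HN.
  match goal with |- Cabs (Csub ?X Cx0) < _ => replace (Csub X Cx0) with X by cx end.
  eapply Rle_lt_trans. apply Hdiff.
  assert (H1 : INR N * q ^ N <= (1/2) ^ N).
  { apply Rle_trans with (2 ^ N * q ^ N). apply Rmult_le_compat_r. apply pow_le; lra. apply INR_le_pow2.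
    rewrite <- Rpow_mult_distr. apply pow_incr. lra. }
  specialize (HN0 N HN). 
  assert (K : M * M / (1 - q) <= 2 * (M * M)).
  { unfold Rdiv. apply Rmult_le_reg_r with (1 - q); [lra|]. rewrite Rmult_assoc, Rinv_l, Rmult_1_r by lra. nra. }
  assert (X0 : 0 <= INR N * q ^ N) by (apply Rmult_le_pos; [apply pos_INR|apply pow_le; lra]).
  set (Y := eps / (2 * M * M + 1)) in *.
  assert (EY : Y * (2 * M * M + 1) = eps) by (unfold Y; field; nra).
  replace (INR N * (M * M * q ^ N / (1 - q))) with ((INR N * q ^ N) * (M * M / (1 - q))) by (field; lra).
  assert (0 <= M * M / (1 - q)) by (unfold Rdiv; apply Rmult_le_pos; [nra|apply Rlt_le, Rinv_0_lt_compat; lra]).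
  apply Rle_lt_trans with (Y * (2 * (M * M))).
  apply Rmult_le_compat; lra.
  nra.
Qed.
Lemma Cabs_ge_Re z : Re z <= Cabs z.
Proof. pose proof (Re_le z). pose proof (Rle_abs (Re z)). lra. Qed.
Lemma Cabs_ge_mRe z : - Re z <= Cabs z.
Proof. pose proof (Re_le z). pose proof (Rle_abs (- Re z)). rewrite Rabs_Ropp in H0. lra. Qed.

Lemma Csqrt_sq w : Cmul (Csqrt w) (Csqrt w) = w.
Proof.
  pose proof (Cabs_ge_Re w). pose proof (Cabs_ge_mRe w). pose proof (Cabs_sq w).
  set (sg := if Rlt_dec (Im w) 0 then -1 else 1).
  assert (Hsg : sg * sg = 1) by (unfold sg; destruct Rlt_dec; ring).
  assert (HA : sqrt ((Cabs w + Re w) / 2) * sqrt ((Cabs w + Re w) / 2) = (Cabs w + Re w) / 2) by (apply sqrt_sqrt; lra).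
  assert (HB : sqrt ((Cabs w - Re w) / 2) * sqrt ((Cabs w - Re w) / 2) = (Cabs w - Re w) / 2) by (apply sqrt_sqrt; lra).
  assert (HAB : sqrt ((Cabs w + Re w) / 2) * sqrt ((Cabs w - Re w) / 2) = Rabs (Im w / 2)).
  { rewrite <- sqrt_mult_alt by lra. rewrite <- sqrt_Rsqr_abs. f_equal. unfold Rsqr.
    replace ((Cabs w + Re w) / 2 * ((Cabs w - Re w) / 2)) with ((Cabs w * Cabs w - Re w * Re w)/4) by field.
    rewrite H1. field. }
  apply Cx_eq; unfold Csqrt, Cmul; simpl; fold sg.
  - replace (sqrt ((Cabs w + Re w) / 2) * sqrt ((Cabs w + Re w) / 2) -
             sg * sqrt ((Cabs w - Re w) / 2) * (sg * sqrt ((Cabs w - Re w) / 2)))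
      with (sqrt ((Cabs w + Re w) / 2) * sqrt ((Cabs w + Re w) / 2) -
             (sg * sg) * (sqrt ((Cabs w - Re w) / 2) * sqrt ((Cabs w - Re w) / 2))) by ring.
    rewrite HA, HB, Hsg. field.
  - replace (sqrt ((Cabs w + Re w) / 2) * (sg * sqrt ((Cabs w - Re w) / 2)) +
             sg * sqrt ((Cabs w - Re w) / 2) * sqrt ((Cabs w + Re w) / 2))
      with (2 * sg * (sqrt ((Cabs w + Re w) / 2) * sqrt ((Cabs w - Re w) / 2))) by ring.
    rewrite HAB. unfold sg. destruct Rlt_dec.
    + rewrite Rabs_left by lra. field.
    + rewrite Rabs_right by lra. field.
Qed.

Lemma Csqrt_re_ge0 w : 0 <= Re (Csqrt w).
Proof. unfold Csqrt; simpl. apply sqrt_pos. Qed.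

Lemma Csqrt_re_pos w : 0 < Re w -> 0 < Re (Csqrt w).
Proof. intros H. unfold Csqrt; simpl. apply sqrt_lt_R0. pose proof (Cabs_ge_Re w). lra. Qed.

Definition Cinv (z : Cx) : Cx :=
  mkC (Re z / (Re z * Re z + Im z * Im z)) (- Im z / (Re z * Re z + Im z * Im z)).

Lemma Cinv_r z : 0 < Re z -> Cmul z (Cinv z) = Cx1.
Proof.
  intros H. assert (0 < Re z * Re z + Im z * Im z) by nra.
  apply Cx_eq; unfold Cinv, Cmul, Cx1, RtoC; simpl; field; lra.
Qed.

Lemma Re_neg_le z : - Cabs z <= Re z.
Proof. pose proof (Cabs_ge_mRe z). lra. Qed.
Definition step (c : nat -> Cx) (s0 : Cx) (p : nat -> Cx) (n : nat) : Cx :=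
  Cmul (Cinv (Cmul (RtoC 2) s0)) (Csub (c n) (conv p p n)).

Fixpoint tl (c : nat -> Cx) (s0 : Cx) (n : nat) : list Cx :=
  match n with
  | O => Cx0 :: nil
  | S m => tl c s0 m ++ (step c s0 (fun k => nth k (tl c s0 m) Cx0) (S m) :: nil)
  end.

Definition tt c s0 n := nth n (tl c s0 n) Cx0.

Lemma tl_len c s0 n : length (tl c s0 n) = S n.
Proof. induction n; simpl. reflexivity. rewrite length_app, IHn. simpl. lia. Qed.

Lemma tl_stable c s0 k d : nth k (tl c s0 (k + d)) Cx0 = tt c s0 k.
Proof.
  induction d. rewrite Nat.add_0_r. reflexivity.
  replace (k + S d)%nat with (S (k + d)) by lia. simpl. rewrite app_nth1. auto.
  rewrite tl_len. lia.
Qed.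

Lemma tl_stable' c s0 k n : (k <= n)%nat -> nth k (tl c s0 n) Cx0 = tt c s0 k.
Proof. intros H. replace n with (k + (n - k))%nat by lia. apply tl_stable. Qed.

Lemma tt0 c s0 : tt c s0 0 = Cx0.
Proof. reflexivity. Qed.

Lemma tt_rec c s0 n : tt c s0 (S n) = step c s0 (tt c s0) (S n).
Proof.
  unfold tt at 1. simpl. rewrite app_nth2 by (rewrite tl_len; lia).
  rewrite tl_len, Nat.sub_diag. simpl. unfold step. f_equal. f_equal. unfold conv.
  apply Csum_ext_lt. intros k Hk.
  destruct k. rewrite !tl_stable' by lia. rewrite tt0. rewrite !Cmul_0_l. reflexivity.
  destruct (Nat.eq_dec (S k) (S n)).
  - rewrite e, Nat.sub_diag. rewrite (tl_stable' c s0 0 n) by lia. rewrite tt0, !Cmul_0_r. reflexivity.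
  - rewrite !tl_stable' by lia. reflexivity.
Qed.

Lemma tt_key c s0 n : 0 < Re s0 -> (1 <= n)%nat ->
  Cadd (Cmul (Cmul (RtoC 2) s0) (tt c s0 n)) (conv (tt c s0) (tt c s0) n) = c n.
Proof.
  intros H Hn. destruct n. lia. rewrite tt_rec. unfold step.
  assert (E : Cmul (Cmul (RtoC 2) s0) (Cinv (Cmul (RtoC 2) s0)) = Cx1).
  { apply Cinv_r. unfold RtoC, Cmul; simpl. lra. }
  set (u := Cinv (Cmul (RtoC 2) s0)) in *. set (w := Cmul (RtoC 2) s0) in *.
  replace (Cmul w (Cmul u (Csub (c (S n)) (conv (tt c s0) (tt c s0) (S n)))))
    with (Cmul (Cmul w u) (Csub (c (S n)) (conv (tt c s0) (tt c s0) (S n)))) by cx.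
  rewrite E. cx.
Qed.

Lemma Rsum_shift f n : Rsum f (S n) = f O + Rsum (fun k => f (S k)) n.
Proof. induction n. simpl. ring. change (Rsum f (S (S n))) with (Rsum f (S n) + f (S n)). rewrite IHn. simpl. ring. Qed.

Lemma Rsum_geom f A q N : 0 <= A -> 0 <= q < 1 -> (forall k, f k <= A * q ^ k) -> Rsum f N <= A / (1 - q).
Proof.
  intros HA Hq Hf. apply Rle_trans with (A * (1 - q ^ N) / (1 - q)).
  - induction N. simpl. right; field; lra. simpl. specialize (Hf N).
    apply Rle_trans with (A * (1 - q ^ N) / (1 - q) + A * q ^ N). lra. right. field. lra.
  - unfold Rdiv. apply Rmult_le_compat_r. apply Rlt_le, Rinv_0_lt_compat; lra.
    pose proof (pow_le q N ltac:(lra)). nra.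
Qed.

Lemma tt_bound c s0 M rho : 0 < Re s0 -> 0 < M -> 0 < rho -> (forall n, Cabs (c n) <= M * rho ^ n) ->
  exists r, 0 < r /\ forall n, Cabs (tt c s0 n) <= Cabs s0 * (/ r) ^ n.
Proof.
  intros Hs HM Hrho Hc. set (sg := Cabs s0).
  assert (Hsg : 0 < sg) by (unfold sg; pose proof (Cabs_ge_Re s0); lra).
  set (r := Rmin (/ (2 * rho)) (sg * sg / (2 * M * rho))).
  assert (Hr : 0 < r) by (apply Rmin_pos; [apply Rinv_0_lt_compat; lra | apply Rdiv_lt_0_compat; nra]).
  assert (Hrr1 : rho * r <= 1/2).
  { apply Rle_trans with (rho * / (2 * rho)). apply Rmult_le_compat_l. lra. apply Rmin_l. right; field; lra. }
  assert (Hrr2 : M * rho * r <= sg * sg / 2).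
  { apply Rle_trans with (M * rho * (sg * sg / (2 * M * rho))). apply Rmult_le_compat_l. nra. apply Rmin_r.
    right; field; lra. }
  exists r. split; auto.
  set (t := tt c s0).
  set (x := fun n => Cabs (t n) * r ^ n).
  set (h := fun n => match n with O => 0 | S _ => Cabs (c n) * r ^ n end).
  assert (Hx0 : forall n, 0 <= x n) by (intros; unfold x; apply Rmult_le_pos; [apply Cabs_ge0 | apply pow_le; lra]).
  assert (Hxz : x O = 0) by (unfold x, t; rewrite tt0, Cabs_Cx0; ring).
  assert (Hh : forall N, Rsum h N <= sg * sg).
  { intros N. apply Rle_trans with (Rsum h (S N)).
    { apply Rsum_mono; [|lia]. intros [|k]. unfold h; lra. unfold h. apply Rmult_le_pos. apply Cabs_ge0. apply pow_le; lra. }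
    rewrite Rsum_shift. simpl (h O). rewrite Rplus_0_l.
    apply Rle_trans with ((M * rho * r) / (1 - rho * r)).
    assert (0 <= M * rho * r) by (apply Rmult_le_pos; [apply Rmult_le_pos|]; lra).
    assert (0 <= rho * r) by (apply Rmult_le_pos; lra).
    apply Rsum_geom. lra. lra.
    intros k. change (h (S k)) with (Cabs (c (S k)) * r ^ (S k)).
    eapply Rle_trans. apply Rmult_le_compat_r. apply pow_le; lra. apply Hc.
    right. rewrite Rpow_mult_distr. simpl. ring.
    apply Rle_trans with (2 * (M * rho * r)).
    { unfold Rdiv. apply Rmult_le_reg_r with (1 - rho * r). nra.
      rewrite Rmult_assoc, Rinv_l, Rmult_1_r by nra.
      assert (0 <= M * rho * r) by (apply Rmult_le_pos; [apply Rmult_le_pos|]; lra).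
      assert (0 <= M*rho*r*(1 - 2*(rho*r))) by (apply Rmult_le_pos; lra). nra. }
    lra. }
  assert (Hb : forall n, 2 * sg * x n <= h n + convR x x n).
  { intros [|n].
    - rewrite Hxz. unfold convR. simpl. rewrite Hxz. lra.
    - pose proof (tt_key c s0 (S n) Hs ltac:(lia)). fold t in H.
      assert (E : Cmul (Cmul (RtoC 2) s0) (t (S n)) = Csub (c (S n)) (conv t t (S n))).
      { rewrite <- H. cx. }
      assert (Habs : 2 * sg * Cabs (t (S n)) <= Cabs (c (S n)) + Rsum (fun k => Cabs (t k) * Cabs (t (S n - k)%nat)) (S (S n))).
      { replace (2 * sg * Cabs (t (S n))) with (Cabs (Cmul (Cmul (RtoC 2) s0) (t (S n)))).
        2: { rewrite !Cabs_mul, Cabs_RtoC, Rabs_right by lra. reflexivity. }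
        rewrite E. eapply Rle_trans. apply Cabs_sub_triangle. apply Rplus_le_compat_l.
        unfold conv. eapply Rle_trans. apply Csum_abs. right. apply Rsum_ext_lt. intros; apply Cabs_mul. }
      unfold x, h, convR.
      replace (Rsum (fun k => Cabs (t k) * r ^ k * (Cabs (t (S n - k)%nat) * r ^ (S n - k))) (S (S n)))
        with (r ^ (S n) * Rsum (fun k => Cabs (t k) * Cabs (t (S n - k)%nat)) (S (S n))).
      2: { rewrite <- Rsum_scal. apply Rsum_ext_lt. intros k Hk.
           replace (r ^ S n) with (r ^ k * r ^ (S n - k)) by (rewrite <- pow_add; f_equal; lia). ring. }
      assert (0 <= r ^ S n) by (apply pow_le; lra). nra. }
  assert (HX : forall N, Rsum x N <= sg).
  { induction N. simpl; lra.
    assert (H1 : 2 * sg * Rsum x (S N) <= Rsum h (S N) + Rsum (convR x x) (S N)).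
    { rewrite <- Rsum_scal, <- Rsum_add. apply Rsum_le. intros; apply Hb. }
    rewrite Rsum_swap in H1.
    assert (H2 : Rsum (fun k => x k * Rsum x (S N - k)) (S N) <= sg * Rsum x (S N)).
    { rewrite <- Rsum_scal. apply Rsum_le. intros [|k] Hk. rewrite Hxz. lra.
      assert (Rsum x (S N - S k) <= Rsum x N) by (apply Rsum_mono; auto; lia).
      specialize (Hx0 (S k)). nra. }
    specialize (Hh (S N)). nra. }
  intros n. specialize (HX (S n)). simpl in HX.
  assert (x n <= sg) by (pose proof (Rsum_nonneg x n Hx0); lra).
  unfold x in H. rewrite pow_inv. assert (0 < r ^ n) by (apply pow_lt; lra).
  apply Rmult_le_reg_r with (r ^ n); auto. rewrite Rmult_assoc, Rinv_l, Rmult_1_r by lra. auto.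
Qed.
Lemma exp_sqrt f c : has_expansion f c -> 0 < Re (c O) ->
  exists s, has_expansion (fun z => Csqrt (f z)) s.
Proof.
  intros Hf Hc0. set (s0 := Csqrt (c O)).
  assert (Hs0 : 0 < Re s0) by (apply Csqrt_re_pos; auto).
  assert (Hsq : Cmul s0 s0 = c O) by apply Csqrt_sq.
  set (sg := Cabs s0). assert (Hsg : 0 < sg) by (unfold sg; pose proof (Cabs_ge_Re s0); lra).
  destruct (exp_bound f c Hf) as [M [rho [HM [Hrho Hcb]]]].
  destruct (tt_bound c s0 M rho Hs0 HM Hrho Hcb) as [r [Hr Ht]].
  set (t := tt c s0) in *.
  set (T := sumfun t).
  assert (HT : has_expansion T t) by (apply (exp_of_bound t sg (/ r)); auto; [lra | apply Rinv_0_lt_compat; lra]).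
  set (E := fun z => Cadd (Cmul s0 s0) (Cadd (Cmul (Cmul (RtoC 2) s0) (T z)) (Cmul (T z) (T z)))).
  assert (HE : has_expansion E c).
  { eapply exp_coef_ext.
    apply (exp_add _ _ _ _ (exp_const (Cmul s0 s0))
             (exp_add _ _ _ _ (exp_scale _ _ (Cmul (RtoC 2) s0) HT) (exp_mul _ _ _ _ HT HT))).
    intros [|n]; simpl.
    - rewrite Hsq. unfold conv. simpl. unfold t. rewrite tt0. cx.
    - rewrite <- (tt_key c s0 (S n) Hs0 ltac:(lia)). fold t. cx. }
  destruct (exp_unique_val f E c Hf HE) as [rho1 [Hrho1 Efe]].
  destruct HT as [RT [HRT HTz]].
  set (rho2 := Rmin (Rmin rho1 RT) (Rmin (r / 2) (r * Re s0 / (4 * sg)))).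
  assert (Hrho2 : 0 < rho2).
  { unfold rho2. repeat apply Rmin_pos; auto; try lra. apply Rdiv_lt_0_compat; nra. }
  exists (fun n => Cadd (constc s0 n) (t n)).
  apply exp_ext_near with (fun z => Cadd s0 (T z)).
  { apply exp_add. apply exp_const. exists RT. split; auto. }
  exists rho2. split; auto. intros z Hz.
  assert (Hz1 : Cabs z < rho1) by (eapply Rlt_le_trans; [apply Hz|]; unfold rho2; eapply Rle_trans; [apply Rmin_l|apply Rmin_l]).
  assert (Hz2 : Cabs z < RT) by (eapply Rlt_le_trans; [apply Hz|]; unfold rho2; eapply Rle_trans; [apply Rmin_l|apply Rmin_r]).
  assert (Hz3 : Cabs z < r / 2) by (eapply Rlt_le_trans; [apply Hz|]; unfold rho2; eapply Rle_trans; [apply Rmin_r|apply Rmin_l]).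
  assert (Hz4 : Cabs z < r * Re s0 / (4 * sg)) by (eapply Rlt_le_trans; [apply Hz|]; unfold rho2; eapply Rle_trans; [apply Rmin_r|apply Rmin_r]).
  set (q := Cabs z / r).
  assert (Hq : 0 <= q <= 1/2).
  { unfold q. pose proof (Cabs_ge0 z). split. unfold Rdiv; apply Rmult_le_pos; [lra|apply Rlt_le, Rinv_0_lt_compat; lra].
    apply Rmult_le_reg_r with r; auto. unfold Rdiv. rewrite Rmult_assoc, Rinv_l by lra. lra. }
  assert (Hq2 : 2 * sg * q < Re s0 / 2).
  { unfold q. apply Rmult_lt_compat_r with (r := 4 * sg / r) in Hz4. 2: apply Rdiv_lt_0_compat; lra.
    replace (r * Re s0 / (4 * sg) * (4 * sg / r)) with (Re s0) in Hz4 by (field; lra).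
    replace (2 * sg * (Cabs z / r)) with (Cabs z * (4 * sg / r) / 2) by (field; lra). lra. }
  set (a := fun n => Cmul (t n) (Cpow z n)).
  assert (Ha : forall k, Cabs (a k) <= sg * q ^ k).
  { intros k. unfold a, q. rewrite Cabs_mul, Cabs_pow. unfold Rdiv. rewrite Rpow_mult_distr.
    specialize (Ht k). pose proof (pow_le (Cabs z) k (Cabs_ge0 z)).
    replace (sg * (Cabs z ^ k * (/ r) ^ k)) with (sg * (/ r) ^ k * Cabs z ^ k) by ring.
    apply Rmult_le_compat_r; auto. }
  assert (HTb : Cabs (T z) <= 2 * sg * q).
  { specialize (HTz z Hz2). apply series_lim in HTz. apply (Clim_le (Csum a) (T z) (2 * sg * q) 1%nat). 2: apply HTz.
    intros N HN. fold a.
    assert (E1 : Csum a 1 = Cx0) by (simpl; unfold a, t; rewrite tt0; cx).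
    replace (Csum a N) with (Csub (Csum a (1 + (N - 1))) (Csum a 1)).
    2: { rewrite E1. replace (1 + (N - 1))%nat with N by lia. cx. }
    eapply Rle_trans. apply (tail_bound' a sg q); auto; lra.
    simpl. unfold Rdiv. apply Rmult_le_reg_r with (1 - q). lra.
    rewrite Rmult_assoc, Rinv_l by lra. assert (0 <= sg * q) by nra. nra. }
  assert (HSpos : 0 < Re (Cadd s0 (T z))).
  { change (Re (Cadd s0 (T z))) with (Re s0 + Re (T z)). pose proof (Re_neg_le (T z)). lra. }
  specialize (Efe z Hz1).
  set (S := Cadd s0 (T z)) in *. set (Q := Csqrt (f z)).
  assert (HSS : Cmul S S = Cmul Q Q).
  { unfold Q. rewrite Csqrt_sq, Efe. unfold E, S. cx. }
  assert (H0 : Cmul (Csub S Q) (Cadd S Q) = Cx0).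
  { transitivity (Csub (Cmul S S) (Cmul Q Q)). cx. rewrite HSS. cx. }
  destruct (Cmul_integral _ _ H0) as [H1|H1].
  - transitivity (Cadd (Csub S Q) Q). cx. rewrite H1. cx.
  - exfalso. assert (Re S = - Re Q) by (transitivity (Re (Csub (Cadd S Q) Q)); [simpl; ring| rewrite H1; simpl; ring]).
    pose proof (Csqrt_re_ge0 (f z)). fold Q in H2. lra.
Qed.
Lemma exp_bound' f c : has_expansion f c ->
  exists A B : R, 0 < A /\ 0 < B /\ forall n : nat, (1 <= n)%nat -> Cabs (c n) <= A * B ^ (n - 1)%nat.
Proof.
  intros H. destruct (exp_bound f c H) as [M [rho [HM [Hrho Hb]]]].
  exists (M * rho), rho. split. nra. split. auto. intros n Hn.
  eapply Rle_trans. apply Hb. replace n with (S (n - 1)) at 1 by lia. simpl. right; ring.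
Qed.

Lemma exp_pow f c : has_expansion f c -> forall n, exists a, has_expansion (fun z => Cpow (f z) n) a.
Proof.
  intros H n. induction n.
  - exists (constc Cx1). apply (exp_ext (fun _ => Cx1)). apply exp_const. reflexivity.
  - destruct IHn as [a Ha]. exists (conv c a). apply (exp_mul _ _ _ _ H Ha).
Qed.

Theorem mainTheorem9
  (N : nat)
  (G : Mat)                       (* Google matrix G = G(0) *)
  (Gl : nat -> Mat)               (* perturbation coefficients G^(l), l >= 1 *)
  (g : Cx -> Mat)                  (* chi |-> G(chi) *)
  (A0 B0 : R)
  (hG : pos_row_stochastic N G)
  (hGseries : forall i j, (i < N)%nat -> (j < N)%nat ->
      has_expansion (fun chi => g chi i j)
                    (fun l => match l with O => G i j | S _ => Gl l i j end))
  (hGreal : exists delta : R, 0 < delta /\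
      forall t : R, Rabs t < delta -> pos_row_stochastic N (g (RtoC t)))
  (hbound : forall l : nat, (1 <= l)%nat ->
      forall v : Vec, vnorm N (matvec N (Gl l) v) <= A0 * B0 ^ (l - 1)%nat * vnorm N v)
  (lam0 : Cx)                      (* lambda in sigma(T) *)
  (hlam0 : is_eigenvalue N (Tmat G) lam0)
  (hlam0_lt : Cabs lam0 < 1)
  (lam : Cx -> Cx)                  (* analytic eigenvalue branch lambda(chi) *)
  (hlam_an : exists c : nat -> Cx, has_expansion lam c)
  (hlam_0 : lam Cx0 = lam0)
  (hlam_eig : exists r : R, 0 < r /\
      forall chi : Cx, Cabs chi < r -> is_eigenvalue N (Tmat (g chi)) (lam chi))
  (sgn : R) (hsgn : sgn = 1 \/ sgn = -1) :
  let mu := fun chi : Cx =>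
    Cadd (lam chi) (Cmul (RtoC sgn)
                         (Cmul Ci (Csqrt (Csub Cx1 (Cmul (lam chi) (lam chi)))))) in
  (exists muc : nat -> Cx,
      has_expansion mu muc /\ muc O = mu Cx0 /\
      exists A13 B13 : R, 0 < A13 /\ 0 < B13 /\
        forall n : nat, (1 <= n)%nat -> Cabs (muc n) <= A13 * B13 ^ (n - 1)%nat) /\
  (forall m : nat, exists a1 : nat -> Cx,
      has_expansion (fun chi => Cpow (mu chi) (2 * m)) a1 /\
      exists A14 B14 : R, 0 < A14 /\ 0 < B14 /\
        forall n : nat, (1 <= n)%nat -> Cabs (a1 n) <= A14 * B14 ^ (n - 1)%nat).
Proof.
  intros mu. destruct hlam_an as [c Hc].
  pose proof (exp_mul _ _ _ _ Hc Hc) as HL2.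
  assert (HF : has_expansion (fun z => Csub Cx1 (Cmul (lam z) (lam z)))
                 (fun n => Cadd (constc Cx1 n) (Cmul (RtoC (-1)) (conv c c n)))).
  { eapply exp_ext. apply (exp_add _ _ _ _ (exp_const Cx1) (exp_scale _ _ (RtoC (-1)) HL2)).
    intros z; simpl. cx. }
  assert (HF0 : 0 < Re (Cadd (constc Cx1 0) (Cmul (RtoC (-1)) (conv c c 0)))).
  { rewrite <- (exp_at0 _ _ HF). rewrite hlam_0. simpl.
    pose proof (Cabs_sq lam0). pose proof (Cabs_ge0 lam0).
    assert (Cabs lam0 * Cabs lam0 < 1) by nra. nra. }
  destruct (exp_sqrt _ _ HF HF0) as [s Hs].
  assert (Hmu : has_expansion mu (fun n => Cadd (c n) (Cmul (RtoC sgn) (Cmul Ci (s n))))).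
  { eapply exp_ext. apply (exp_add _ _ _ _ Hc (exp_scale _ _ (RtoC sgn) (exp_scale _ _ Ci Hs))).
    intros z. reflexivity. }
  split.
  - eexists. split. apply Hmu. split. symmetry. apply (exp_at0 _ _ Hmu).
    apply (exp_bound' _ _ Hmu).
  - intros m. destruct (exp_pow _ _ Hmu (2 * m)) as [a Ha]. exists a. split. auto.
    apply (exp_bound' _ _ Ha).
Qed.
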